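(* For every $\varepsilon>0$ there exists $C_\varepsilon>0$ (independent of $N$) such that for any $A\subset\mathbb{Z}^2$ with $|A|\le|\{p\in\mathbb{Z}^2:|p|\le2k_{\mathrm F}\}|$, $$\hbar^2\sum_{p\in A}e(p)^{-1}\le C_\varepsilon N^\varepsilon.$$
   Context: $N=|B_{\mathrm F}|$ with $B_{\mathrm F}=\{k\in\mathbb{Z}^2:|k|<k_{\mathrm F}\}$, where $k_{\mathrm F}>0$ satisfies $k_{\mathrm F}^2=\frac12(\inf_{p\in\mathbb{Z}^2\setminus B_{\mathrm F}}|p|^2+\sup_{q\in B_{\mathrm F}}|q|^2)$; $\hbar=N^{-1/2}$; $e(p)=\hbar^2||p|^2-k_{\mathrm F}^2|$ for $p\in\mathbb{Z}^2$. *)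

(* Defs.v *)
From Stdlib Require Import Reals Lra ZArith List.
Open Scope R_scope.

Definition znorm (p : Z * Z) : R :=
  sqrt (IZR (fst p) ^ 2 + IZR (snd p) ^ 2).

Definition inBF (kF : R) (k : Z * Z) : Prop := znorm k < kF.

Definition is_inf (S : R -> Prop) (m : R) : Prop :=
  (forall x, S x -> m <= x) /\ (forall m', (forall x, S x -> m' <= x) -> m' <= m).
Definition is_sup (S : R -> Prop) (m : R) : Prop := is_lub S m.

Definition fermi_momentum (kF : R) : Prop :=
  0 < kF /\
  exists i s,
    is_inf (fun x => exists p, ~ inBF kF p /\ x = znorm p ^ 2) i /\
    is_sup (fun x => exists q, inBF kF q /\ x = znorm q ^ 2) s /\
    kF ^ 2 = (i + s) / 2.

Definition has_card (P : Z * Z -> Prop) (n : nat) : Prop :=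
  exists l : list (Z * Z), NoDup l /\ (forall x, In x l <-> P x) /\ length l = n.

Definition hbar (N : nat) : R := / sqrt (INR N).

Definition e_kin (N : nat) (kF : R) (p : Z * Z) : R :=
  hbar N ^ 2 * Rabs (znorm p ^ 2 - kF ^ 2).

Definition sum_inv_e (N : nat) (kF : R) (A : list (Z * Z)) : R :=
  fold_right (fun p acc => / e_kin N kF p + acc) 0 A.

(* Main.v *)
Require Import Defs.
From Stdlib Require Import Reals ZArith List.
From Stdlib Require Import Lra Lia Znumtheory.
From mathcomp Require ssreflect ssrfun ssrbool eqtype ssrnat seq div prime bigop path.
Set Bullet Behavior "Strict Subproofs".
Import ListNotations.
Open Scope R_scope.


Lemma exp_le_mono x y : x <= y -> exp x <= exp y.
Proof. intros [H|H]. - left; apply exp_increasing; auto. - subst; lra. Qed.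

Lemma ln_le_mono x y : 0 < x -> x <= y -> ln x <= ln y.
Proof. intros Hx [H|H]. - left; apply ln_increasing; auto. - subst; lra. Qed.

Lemma Rpower_pos x y : 0 < Rpower x y.
Proof. unfold Rpower; apply exp_pos. Qed.

Lemma pow2_ge n : INR (S n) <= 2 ^ n.
Proof.
induction n. - simpl; lra.
- pose proof (S_INR (S n)); pose proof (S_INR n). change (2 ^ S n) with (2 * 2 ^ n). assert (1 <= 2 ^ n) by (apply pow_R1_Rle; lra). lra.
Qed.

Lemma fac_small eps p e : 0 < eps -> (2 <= p)%nat ->
  INR (S e) <= (1 + / (eps * ln 2)) * Rpower (INR p) (INR e * eps).
Proof.
intros He Hp.
assert (Hl2 : 0 < ln 2) by (pose proof ln_lt_2; lra).
assert (Hp2 : 2 <= INR p) by (apply (le_INR 2) in Hp; simpl in Hp; lra).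
assert (Hlp : ln 2 <= ln (INR p)) by (apply ln_le_mono; lra).
set (d := eps * ln 2).
assert (Hd : 0 < d) by (unfold d; nra).
assert (H1 : 1 + INR e * d <= Rpower (INR p) (INR e * eps)).
{ unfold Rpower. eapply Rle_trans; [| apply exp_ineq1_le].
  assert (0 <= INR e) by apply pos_INR. assert (0 <= INR e * eps) by nra. unfold d. assert (0 <= INR e * eps * (ln (INR p) - ln 2)) by (apply Rmult_le_pos; lra). nra. }
assert (H0 : 0 <= INR e) by apply pos_INR.
rewrite S_INR.
apply Rle_trans with ((1 + / d) * (1 + INR e * d)).
- assert (/ d * d = 1) by (field; lra).
  assert (0 < / d) by (apply Rinv_0_lt_compat; lra). nra.
- apply Rmult_le_compat_l; [|exact H1].
  assert (0 < / d) by (apply Rinv_0_lt_compat; lra). lra.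
Qed.

Lemma fac_large eps p e : 2 <= Rpower (INR p) eps -> (1 <= p)%nat ->
  INR (S e) <= 1 * Rpower (INR p) (INR e * eps).
Proof.
intros H Hp. rewrite Rmult_1_l.
assert (Hp0 : 0 < INR p) by (apply lt_0_INR; lia).
rewrite Rmult_comm, <- Rpower_mult, Rpower_pow by apply Rpower_pos.
eapply Rle_trans; [apply pow2_ge|]. apply pow_incr; lra.
Qed.

Lemma mul4 a b x y u v : 0 <= a -> 0 <= b -> a <= x * u -> b <= y * v -> a * b <= x * y * (u * v).
Proof.
intros. replace (x * y * (u * v)) with ((x * u) * (y * v)) by ring.
apply Rmult_le_compat; auto.
Qed.

Module NT.
Import ssreflect ssrfun ssrbool eqtype ssrnat seq div prime bigop path.
Local Open Scope nat_scope.
Definition dcnt n := size (divisors n).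
Lemma size_add_div f divs : size (PrimeDecompAux.add_divisors f divs) = f.2.+1 * size divs.
Proof.
case: f => p e /=; elim: e => [|e IH] /=; first by rewrite mul1n.
by rewrite size_merge size_cat size_map IH mulSn addnC.
Qed.
Lemma dcntE n : dcnt n = \prod_(f <- prime_decomp n) f.2.+1.
Proof.
rewrite /dcnt /divisors; elim: (prime_decomp n) => [|f pd IH] /=.
  by rewrite big_nil.
by rewrite big_cons size_add_div IH.
Qed.
Lemma dcnt_dvd m n : 0 < n -> m %| n -> dcnt m <= dcnt n.
Proof.
move=> n0 mn; have m0 : 0 < m by apply: dvdn_gt0 mn.
apply: uniq_leq_size; first exact: divisors_uniq.
by move=> x; rewrite -!dvdn_divisors // => xm; apply: dvdn_trans mn.
Qed.

Lemma INR_mul a b : INR (a * b) = (INR a * INR b)%R.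
Proof. by rewrite -multE mult_INR. Qed.
Lemma INR_exp a b : INR (a ^ b) = (INR a ^ b)%R.
Proof. elim: b => [|b IH]; first by rewrite expn0. by rewrite expnS INR_mul IH. Qed.

Lemma prod_bound eps P0 c : (0 < eps)%R -> (1 <= c)%R ->
  (forall p e, prime p -> p < P0 -> (INR e.+1%N <= c * Rpower (INR p) (INR e * eps))%R) ->
  (forall p e, prime p -> P0 <= p -> (INR e.+1 <= 1 * Rpower (INR p) (INR e * eps))%R) ->
  forall pd : seq (nat * nat), all (fun f => prime f.1) pd ->
  (INR (\prod_(f <- pd) f.2.+1)%N <= c ^ (count (fun f => f.1 < P0) pd)%N *
      Rpower (INR (\prod_(f <- pd) f.1 ^ f.2)%N) eps)%R.
Proof.
move=> Heps Hc Hs Hl; elim=> [|[p e] pd IH] /=.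
  rewrite !big_nil /= /Rpower ln_1 Rmult_0_r exp_0; lra.
move=> /andP [pp Hall]; rewrite !big_cons /= INR_mul INR_mul INR_exp.
have p0 : (0 < INR p)%R by apply: lt_0_INR; apply/ltP; apply: prime_gt0.
have P1 : (0 < INR (\prod_(f <- pd) f.1 ^ f.2)%N)%R.
  apply: lt_0_INR; apply/ltP; rewrite big_seq; apply: prodn_cond_gt0 => f fin.
  by rewrite expn_gt0; apply/orP; left; apply: prime_gt0; move/allP: Hall; apply.
rewrite -Rpower_mult_distr; last by []; last by apply: pow_lt.
rewrite -(Rpower_pow e) // Rpower_mult pow_add.
have IH' := IH Hall.
have I0 : (0 <= INR e.+1)%R by apply: pos_INR.
case: (ltnP p P0) => hp.
- apply: mul4 => //; first by apply: pos_INR.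
  by rewrite /= Rmult_1_r; apply: Hs.
- apply: mul4 => //; first by apply: pos_INR.
  by rewrite /=; apply: Hl.
Qed.

Lemma count_small P0 n : count (fun f : nat * nat => f.1 < P0) (prime_decomp n) <= P0.
Proof.
have -> : count (fun f : nat * nat => f.1 < P0) (prime_decomp n) = count (fun p => p < P0) (primes n).
  by rewrite /primes count_map.
rewrite -size_filter.
have sub : {subset filter (fun p => p < P0) (primes n) <= iota 0 P0}.
  by move=> x; rewrite mem_filter mem_iota => /andP [h _]; rewrite add0n h.
have := uniq_leq_size (filter_uniq _ (primes_uniq n)) sub.
by rewrite size_iota.
Qed.

Lemma dcnt_bound eps : (0 < eps)%R -> exists C : R, (1 <= C)%R /\
  forall n, 0 < n -> (INR (dcnt n) <= C * Rpower (INR n) eps)%R.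
Proof.
move=> He.
have [P0 HP0] := INR_unbounded (exp (ln 2 / eps)).
have Hl2 : (0 < ln 2)%R by have := ln_lt_2; lra.
set c := (1 + / (eps * ln 2))%R.
have Hc : (1 <= c)%R.
  have : (0 < / (eps * ln 2))%R by apply: Rinv_0_lt_compat; nra.
  rewrite /c; lra.
exists (c ^ P0)%R; split; first by apply: pow_R1_Rle.
move=> n n0.
have Hs : forall p e, prime p -> p < P0 -> (INR e.+1 <= c * Rpower (INR p) (INR e * eps))%R.
  move=> p e pp _; apply: fac_small => //; apply/leP; exact: prime_gt1.
have Hl : forall p e, prime p -> P0 <= p -> (INR e.+1 <= 1 * Rpower (INR p) (INR e * eps))%R.
  move=> p e pp hp; apply: fac_large; last by apply/leP; apply: prime_gt0.
  have hp' : (INR P0 <= INR p)%R by apply: le_INR; apply/leP.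
  have e0 : (0 < exp (ln 2 / eps))%R by apply: exp_pos.
  rewrite /Rpower; rewrite -{1}(exp_ln 2); last by lra.
  apply: exp_le_mono.
  have : (ln (exp (ln 2 / eps)) <= ln (INR p))%R by apply: ln_le_mono; lra.
  rewrite ln_exp => h.
  have -> : ln 2 = (eps * (ln 2 / eps))%R by field; lra.
  by apply: Rmult_le_compat_l; lra.
have Hall : all (fun f : nat * nat => prime f.1) (prime_decomp n).
  by apply/allP => [[p e]] /mem_prime_decomp [pp _ _].
have H := prod_bound eps P0 c He Hc Hs Hl _ Hall.
rewrite dcntE; apply: (Rle_trans _ _ _ H).
rewrite -(prod_prime_decomp n0).
apply: Rmult_le_compat_r; first by apply: Rlt_le; apply: Rpower_pos.
apply: Rle_pow => //; apply/leP; apply: count_small.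
Qed.
End NT.

Open Scope R_scope.
Section ZPart1.
Local Open Scope Z_scope.

Lemma gcd_one_of_div h x m : (h | m) -> Z.gcd x m = 1 -> Z.gcd h x = 1.
Proof.
intros Hh Hx.
assert (Ht : (Z.gcd h x | 1)).
{ rewrite <- Hx. apply Z.gcd_greatest.
  - apply Z.gcd_divide_r.
  - eapply Z.divide_trans; [apply Z.gcd_divide_l| exact Hh]. }
destruct (Z.divide_1_r _ Ht) as [H|H]; auto.
pose proof (Z.gcd_nonneg h x); lia.
Qed.

Lemma coprime_norm a b : Z.gcd a b = 1 -> Z.gcd a (a*a + b*b) = 1.
Proof.
intros H. replace (a*a+b*b) with (b*b + a*a) by ring.
rewrite Z.gcd_add_mult_diag_r. apply Zgcd_1_rel_prime.
apply rel_prime_mult; apply Zgcd_1_rel_prime; auto.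
Qed.

Lemma coprime_norm' a b : Z.gcd a b = 1 -> Z.gcd b (a*a + b*b) = 1.
Proof.
intros H. replace (a*a+b*b) with (b*b + a*a) by ring.
apply coprime_norm. rewrite Z.gcd_comm; auto.
Qed.

Lemma not4 a b : Z.gcd a b = 1 -> ~ (4 | a*a + b*b).
Proof.
intros H [k Hk].
destruct (Z.Even_or_Odd a) as [[p Hp]|[p Hp]];
destruct (Z.Even_or_Odd b) as [[q Hq]|[q Hq]]; subst.
- assert (H2 : (2 | Z.gcd (2*p) (2*q))).
  { apply Z.gcd_greatest; [exists p | exists q]; ring. }
  rewrite H in H2. apply Z.divide_pos_le in H2; lia.
- nia.
- nia.
- nia.
Qed.

Lemma sq0 x y : x*x + y*y = 0 -> x = 0 /\ y = 0.
Proof. intros; nia. Qed.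

Lemma tail_cases a b c d m k : 0 < m -> a*a+b*b = m -> c*c+d*d = m -> a*d - b*c = k*m ->
  (c = a /\ d = b) \/ (c = -a /\ d = -b) \/ (c = -b /\ d = a) \/ (c = b /\ d = -a).
Proof.
intros Hm H1 H2 Hk.
assert (Hid : (a*d-b*c)*(a*d-b*c) + (a*c+b*d)*(a*c+b*d) = m*m).
{ transitivity ((a*a+b*b)*(c*c+d*d)); [ring|]. rewrite H1, H2. ring. }
rewrite Hk in Hid.
assert (Hs : 0 <= (a*c+b*d)*(a*c+b*d)) by apply Z.square_nonneg.
assert (Hk2 : k*k*(m*m) <= 1*(m*m)).
{ replace (k*m*(k*m)) with (k*k*(m*m)) in Hid by ring. lia. }
assert (Hmm : 0 < m*m) by (apply Z.mul_pos_pos; lia).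
apply Z.mul_le_mono_pos_r in Hk2; [|exact Hmm].
assert (k = 0 \/ k = 1 \/ k = -1) by nia.
destruct H as [ -> | [ -> | -> ] ].
- assert (Hd : (a*c+b*d)*(a*c+b*d) = m*m) by lia.
  assert (Hdot : (a*c+b*d - m)*(a*c+b*d + m) = 0) by (ring_simplify; lia).
  apply Z.mul_eq_0 in Hdot. destruct Hdot as [Hd1|Hd1].
  + left. assert ((a-c)*(a-c) + (b-d)*(b-d) = 0).
    { transitivity ((a*a+b*b) + (c*c+d*d) - 2*(a*c+b*d)); [ring|]. lia. }
    apply sq0 in H. lia.
  + right; left. assert ((a+c)*(a+c) + (b+d)*(b+d) = 0).
    { transitivity ((a*a+b*b) + (c*c+d*d) + 2*(a*c+b*d)); [ring|]. lia. }
    apply sq0 in H. lia.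
- right; right; left.
  assert ((a-d)*(a-d) + (b+c)*(b+c) = 0).
  { transitivity ((a*a+b*b) + (c*c+d*d) - 2*(a*d-b*c)); [ring|]. lia. }
  apply sq0 in H. lia.
- right; right; right.
  assert ((a+d)*(a+d) + (b-c)*(b-c) = 0).
  { transitivity ((a*a+b*b) + (c*c+d*d) + 2*(a*d-b*c)); [ring|]. lia. }
  apply sq0 in H. lia.
Qed.

Lemma prim_fiber m a0 b0 a b c d : 0 < m ->
  a0*a0+b0*b0 = m -> Z.gcd a0 b0 = 1 ->
  a*a+b*b = m -> Z.gcd a b = 1 ->
  c*c+d*d = m -> Z.gcd c d = 1 ->
  Z.gcd (a*b0 - b*a0) m = Z.gcd (c*b0 - d*a0) m ->
  (c = a /\ d = b) \/ (c = -a /\ d = -b) \/ (c = -b /\ d = a) \/ (c = b /\ d = -a).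
Proof.
intros Hm H0 G0 H1 G1 H2 G2 Hg.
set (D := a*b0 - b*a0). set (E := a*b0 + b*a0).
set (D2 := c*b0 - d*a0). set (E2 := c*b0 + d*a0).
set (g := Z.gcd D m). fold D D2 in Hg. fold g in Hg.
assert (Hg0 : 0 < g).
{ pose proof (Z.gcd_nonneg D m). assert (g <> 0). { unfold g; rewrite Z.gcd_eq_0; lia. } lia. }
destruct (Z.gcd_divide_r D m) as [m' Hm']. fold g in Hm'.
destruct (Z.gcd_divide_l D m) as [D' HD']. fold g in HD'.
destruct (Z.gcd_divide_l D2 m) as [D2' HD2']. rewrite <- Hg in HD2'. fold g in HD2'.
assert (Hc1 : Z.gcd D' m' = 1).
{ assert (Z.gcd (D/g) (m/g) = 1) by (apply Z.gcd_div_gcd; [lia|reflexivity]).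
  rewrite HD', Hm' in H. rewrite !Z.div_mul in H by lia. exact H. }
assert (Hc2 : Z.gcd D2' m' = 1).
{ assert (Z.gcd (D2/g) (m/g) = 1) by (apply Z.gcd_div_gcd; [lia| rewrite Hg; reflexivity]).
  rewrite HD2', Hm' in H. rewrite !Z.div_mul in H by lia. exact H. }
assert (HDE : D*E = m*(b0*b0 - b*b)).
{ unfold D, E. transitivity ((a*a+b*b)*(b0*b0) - (a0*a0+b0*b0)*(b*b)); [ring|]. rewrite H1, H0. ring. }
assert (HDE2 : D2*E2 = m*(b0*b0 - d*d)).
{ unfold D2, E2. transitivity ((c*c+d*d)*(b0*b0) - (a0*a0+b0*b0)*(d*d)); [ring|]. rewrite H2, H0. ring. }
assert (HE : (m' | E)).
{ apply Z.gauss with D'; [| rewrite Z.gcd_comm; exact Hc1].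
  apply (Z.mul_divide_cancel_r _ _ g); [lia|].
  exists (b0*b0 - b*b). replace (D' * E * g) with (D * E) by (rewrite HD'; ring).
  rewrite HDE, Hm'; ring. }
assert (HE2 : (m' | E2)).
{ apply Z.gauss with D2'; [| rewrite Z.gcd_comm; exact Hc2].
  apply (Z.mul_divide_cancel_r _ _ g); [lia|].
  exists (b0*b0 - d*d). replace (D2' * E2 * g) with (D2 * E2) by (rewrite HD2'; ring).
  rewrite HDE2, Hm'; ring. }
set (det := a*d - b*c).
assert (I1 : b0*det = D*d - D2*b) by (unfold det, D, D2; ring).
assert (I2 : b0*det = E*d - E2*b) by (unfold det, E, E2; ring).
assert (Hgd : (g | b0*det)).
{ rewrite I1, HD', HD2'. apply Z.divide_sub_r; apply Z.divide_mul_l; apply Z.divide_mul_r; apply Z.divide_refl. }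
assert (Hmd : (m' | b0*det)).
{ rewrite I2. apply Z.divide_sub_r; apply Z.divide_mul_l; assumption. }
assert (Ha0m : Z.gcd a0 m = 1) by (rewrite <- H0; apply coprime_norm; auto).
assert (Hb0m : Z.gcd b0 m = 1) by (rewrite <- H0; apply coprime_norm'; auto).
assert (Hbm : Z.gcd b m = 1) by (rewrite <- H1; apply coprime_norm'; auto).
assert (Ham : Z.gcd a m = 1) by (rewrite <- H1; apply coprime_norm; auto).
set (h := Z.gcd g m').
assert (Hhg : (h | g)) by apply Z.gcd_divide_l.
assert (Hhm' : (h | m')) by apply Z.gcd_divide_r.
assert (Hhm : (h | m)) by (rewrite Hm'; apply Z.divide_mul_r; auto).
assert (HhD : (h | D)) by (rewrite HD'; apply Z.divide_mul_r; auto).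
assert (HhE : (h | E)) by (apply Z.divide_trans with m'; assumption).
assert (Hh2 : (h | 2)).
{ assert (HX : (h | 2*b*a0)).
  { replace (2*b*a0) with (E - D) by (unfold E, D; ring). apply Z.divide_sub_r; auto. }
  assert (Hx1 : (h | 2*b)).
  { apply Z.gauss with a0. { replace (a0 * (2*b)) with (2*b*a0) by ring. exact HX. }
    apply (gcd_one_of_div h a0 m); auto. }
  apply Z.gauss with b. { replace (b*2) with (2*b) by ring. exact Hx1. }
  apply (gcd_one_of_div h b m); auto. }
assert (Hh1 : h = 1).
{ assert (0 <= h) by apply Z.gcd_nonneg.
  assert (h <= 2) by (apply Z.divide_pos_le; [lia|auto]).
  assert (h <> 0). { unfold h. rewrite Z.gcd_eq_0. lia. }
  assert (h <> 2).
  { intros E2h. apply (not4 a0 b0 G0). rewrite H0, Hm'.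
    destruct Hhg as [u Hu]. destruct Hhm' as [v Hv]. rewrite E2h in Hu, Hv.
    exists (u*v). rewrite Hu, Hv. ring. }
  lia. }
assert (Hmdet0 : (m | b0*det)).
{ rewrite Hm'. destruct Hgd as [u Hu].
  assert (Hv : (m' | u)).
  { apply Z.gauss with g. { rewrite Z.mul_comm, <- Hu. exact Hmd. }
    rewrite Z.gcd_comm. exact Hh1. }
  destruct Hv as [v Hv]. exists v. rewrite Hu, Hv. ring. }
assert (Hmdet : (m | det)).
{ apply Z.gauss with b0; auto. rewrite Z.gcd_comm; auto. }
destruct Hmdet as [k Hk].
apply (tail_cases a b c d m k); auto.
Qed.

End ZPart1.
Module NT2.
Import ssreflect ssrfun ssrbool eqtype ssrnat seq div prime bigop path.
Local Open Scope nat_scope.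
Lemma in_In (s : seq nat) x : x \in s -> List.In x s.
Proof.
elim: s => [|y s IH] //=; rewrite in_cons => /orP [/eqP ->|h]; [by left | by right; apply: IH].
Qed.
Lemma Zdvd_nat (a b : Z) : (0 <= a)%Z -> (0 <= b)%Z -> (a | b)%Z -> Z.to_nat a %| Z.to_nat b.
Proof.
move=> a0 b0 [q Hq].
case: (Z.eq_dec a 0) => [Ea|Na].
  by subst a; rewrite Hq Z.mul_0_r; rewrite dvdn0.
have q0 : (0 <= q)%Z by nia.
rewrite Hq Z2Nat.inj_mul //; apply/dvdnP; exists (Z.to_nat q); by [].
Qed.
Lemma divL (m g : Z) : (0 < m)%Z -> (0 < g)%Z -> (g | m)%Z ->
  List.In g (List.map Z.of_nat (divisors (Z.to_nat m))).
Proof.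
move=> m0 g0 gm.
have -> : g = Z.of_nat (Z.to_nat g) by rewrite Z2Nat.id //; lia.
apply: in_map; apply: in_In; rewrite -dvdn_divisors; last by apply/ltP; lia.
apply: Zdvd_nat => //; lia.
Qed.
Lemma dcnt_dvdZ (m n : Z) : (0 < m)%Z -> (0 < n)%Z -> (m | n)%Z ->
  (NT.dcnt (Z.to_nat m) <= NT.dcnt (Z.to_nat n))%coq_nat.
Proof.
move=> m0 n0 mn; apply/leP; apply: NT.dcnt_dvd; first by apply/ltP; lia.
apply: Zdvd_nat => //; lia.
Qed.
End NT2.

Open Scope R_scope.
Section ZPart2.
Local Open Scope Z_scope.

Lemma filter_split {X} (p : X -> bool) l :
  length l = (length (filter p l) + length (filter (fun x => negb (p x)) l))%nat.
Proof. induction l as [|x l IH]; simpl; auto. destruct (p x); simpl; lia. Qed.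

Lemma filter_filter_le {X} (p q : X -> bool) l :
  (length (filter p (filter q l)) <= length (filter p l))%nat.
Proof.
induction l as [|x l IH]; simpl; auto.
destruct (p x) eqn:Ep; destruct (q x); simpl; rewrite ?Ep; simpl; lia.
Qed.

Lemma count_keys {X} (f : X -> Z) (L : list Z) (K : nat) : forall (l : list X),
  (forall x, In x l -> In (f x) L) ->
  (forall y, (length (filter (fun x => Z.eqb (f x) y) l) <= K)%nat) ->
  (length l <= K * length L)%nat.
Proof.
induction L as [|y L IH]; intros l Hin Hf.
- destruct l as [|x l]; simpl; [lia|]. exfalso; apply (Hin x); left; auto.
- rewrite (filter_split (fun x => Z.eqb (f x) y) l).
  assert (H1 := Hf y).
  assert (H2 : (length (filter (fun x => negb (Z.eqb (f x) y)) l) <= K * length L)%nat).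
  { apply IH.
    - intros x Hx. apply filter_In in Hx. destruct Hx as [Hx Hn].
      destruct (Hin x Hx) as [E|E]; auto.
      rewrite E, Z.eqb_refl in Hn. discriminate.
    - intros y'. eapply Nat.le_trans; [apply filter_filter_le|]. apply Hf. }
  simpl. lia.
Qed.

Lemma prim_count m l : 0 < m -> NoDup l ->
  (forall x, In x l -> fst x * fst x + snd x * snd x = m /\ Z.gcd (fst x) (snd x) = 1) ->
  (length l <= 4 * NT.dcnt (Z.to_nat m))%nat.
Proof.
intros Hm Hnd Hl.
destruct l as [|[a0 b0] l0] eqn:El; [simpl; lia|].
rewrite <- El in *.
destruct (Hl (a0,b0)) as [N0 G0]; [rewrite El; left; auto|]. simpl in N0, G0.
set (key := fun x : Z * Z => Z.gcd (fst x * b0 - snd x * a0) m).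
set (L := map Z.of_nat (prime.divisors (Z.to_nat m))).
replace (NT.dcnt (Z.to_nat m)) with (length L) by (unfold L; rewrite length_map; reflexivity).
apply (count_keys key).
- intros x Hx. apply NT2.divL; auto.
  + assert (0 <= key x) by apply Z.gcd_nonneg.
    assert (key x <> 0) by (unfold key; rewrite Z.gcd_eq_0; lia). lia.
  + apply Z.gcd_divide_r.
- intros y. set (F := filter _ l).
  assert (HF : NoDup F) by (apply NoDup_filter; auto).
  destruct F as [|[a b] F0] eqn:EF; [simpl; lia|].
  rewrite <- EF in *.
  assert (Hab : In (a,b) l /\ key (a,b) = y).
  { assert (In (a,b) F) by (rewrite EF; left; auto).
    unfold F in H. apply filter_In in H. destruct H as [H1 H2]. split; auto. apply Z.eqb_eq; auto. }
  destruct Hab as [Hab Hk].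
  destruct (Hl _ Hab) as [Na Ga]. simpl in Na, Ga.
  change 4%nat with (length [(a,b); (-a,-b); (-b,a); (b,-a)]).
  apply NoDup_incl_length; auto.
  intros [c d] Hcd. unfold F in Hcd. apply filter_In in Hcd. destruct Hcd as [Hcd Hk2].
  apply Z.eqb_eq in Hk2. destruct (Hl _ Hcd) as [Nc Gc]. simpl in Nc, Gc.
  destruct (prim_fiber m a0 b0 a b c d) as [[-> ->]|[[-> ->]|[[-> ->]|[-> ->]]]]; auto.
  + unfold key in Hk, Hk2. simpl in Hk, Hk2. congruence.
  + left; auto.
  + right; left; auto.
  + right; right; left; auto.
  + right; right; right; left; auto.
Qed.

Lemma r2_count n l : 0 < n -> NoDup l ->
  (forall x, In x l -> fst x * fst x + snd x * snd x = n) ->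
  (length l <= (4 * NT.dcnt (Z.to_nat n)) * NT.dcnt (Z.to_nat n))%nat.
Proof.
intros Hn Hnd Hl.
set (key := fun x : Z * Z => Z.gcd (fst x) (snd x)).
set (L := map Z.of_nat (prime.divisors (Z.to_nat n))).
replace (NT.dcnt (Z.to_nat n)) with (length L) at 2 by (unfold L; rewrite length_map; reflexivity).
assert (Hkey : forall x, In x l -> 0 < key x /\ (key x | fst x) /\ (key x | snd x) /\ (key x | n)).
{ intros x Hx. pose proof (Hl x Hx) as Hx2.
  assert (H1 : (key x | fst x)) by apply Z.gcd_divide_l.
  assert (H2 : (key x | snd x)) by apply Z.gcd_divide_r.
  repeat split; auto.
  - assert (0 <= key x) by apply Z.gcd_nonneg.
    assert (key x <> 0).
    { unfold key; rewrite Z.gcd_eq_0. intros [E1 E2]. rewrite E1, E2 in Hx2. lia. }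
    lia.
  - rewrite <- Hx2. apply Z.divide_add_r; apply Z.divide_mul_l; auto. }
apply (count_keys key).
- intros x Hx. destruct (Hkey x Hx) as [K1 [K2 [K3 K4]]]. apply NT2.divL; auto.
- intros y. set (F := filter _ l).
  destruct F as [|x0 F0] eqn:EF; [simpl; lia|].
  rewrite <- EF in *.
  assert (HF : forall x, In x F -> In x l /\ key x = y).
  { intros x Hx. unfold F in Hx. apply filter_In in Hx. destruct Hx as [H1 H2].
    split; auto. apply Z.eqb_eq; auto. }
  destruct (HF x0) as [Hx0 Ky]; [rewrite EF; left; auto|].
  destruct (Hkey x0 Hx0) as [Y0 [_ [_ Yn]]]. rewrite Ky in Y0, Yn.
  set (m := n / (y*y)).
  assert (Hyy : (y*y | n)).
  { destruct (Hkey x0 Hx0) as [_ [D1 [D2 _]]]. rewrite Ky in D1, D2.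
    destruct D1 as [u Hu]. destruct D2 as [v Hv].
    exists (u*u + v*v). rewrite <- (Hl x0 Hx0), Hu, Hv. ring. }
  assert (Hnm : n = m * (y*y)).
  { unfold m. destruct Hyy as [w Hw]. rewrite Hw at 2. rewrite Z.div_mul by nia. exact Hw. }
  assert (Hm : 0 < m) by nia.
  set (F' := map (fun x : Z*Z => (fst x / y, snd x / y)) F).
  assert (Hdec : forall x, In x F -> fst x = y * (fst x / y) /\ snd x = y * (snd x / y)).
  { intros x Hx. destruct (HF x Hx) as [Hxl Kx]. destruct (Hkey x Hxl) as [_ [D1 [D2 _]]].
    rewrite Kx in D1, D2. split; apply Z.div_exact; try lia; apply Z.mod_divide; auto; lia. }
  replace (length F) with (length F') by (unfold F'; apply length_map).
  eapply Nat.le_trans.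
  + apply (prim_count m F').
    * exact Hm.
    * unfold F'. apply NoDup_map_NoDup_ForallPairs.
      -- intros [a b] [c d] Hab Hcd E. simpl in E. injection E as E1 E2.
         destruct (Hdec _ Hab) as [A1 A2]. destruct (Hdec _ Hcd) as [C1 C2].
         simpl in *. f_equal; congruence.
      -- unfold F. apply NoDup_filter; auto.
    * intros x' Hx'. unfold F' in Hx'. apply in_map_iff in Hx'.
      destruct Hx' as [[a b] [Ex Hab]]. subst x'. simpl.
      destruct (Hdec _ Hab) as [A1 A2]. simpl in A1, A2.
      destruct (HF _ Hab) as [Hl' Kab]. pose proof (Hl _ Hl') as Nab. simpl in Nab.
      split.
      -- apply (Z.mul_cancel_r _ _ (y*y)); [nia|]. rewrite <- Hnm, <- Nab.
         rewrite A1 at 3. rewrite A1 at 4. rewrite A2 at 3. rewrite A2 at 4. ring.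
      -- apply Z.gcd_div_gcd; [lia|]. rewrite <- Kab. reflexivity.
  + apply Nat.mul_le_mono_l. apply NT2.dcnt_dvdZ; auto. exists (y*y). rewrite Hnm at 1; ring. Qed.

End ZPart2.
Open Scope R_scope.

Lemma Rpower1 e : Rpower 1 e = 1.
Proof. unfold Rpower. rewrite ln_1, Rmult_0_r, exp_0. reflexivity. Qed.

Lemma r2_bound eps : 0 < eps -> exists C, 0 < C /\
  forall (n : Z) l, (0 <= n)%Z -> NoDup l ->
  (forall x, In x l -> (fst x * fst x + snd x * snd x = n)%Z) ->
  INR (length l) <= C * Rpower (IZR n + 1) eps.
Proof.
intros He.
destruct (NT.dcnt_bound (eps/2)) as [C0 [HC0 HC]]; [lra|].
exists (4 * C0 * C0). split; [nra|].
intros n l Hn Hnd Hl.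
destruct (Z.eq_dec n 0) as [E0|N0].
- subst n. rewrite Rplus_0_l, Rpower1.
  assert (Hlen : (length l <= 1)%nat).
  { change 1%nat with (length [(0%Z,0%Z)]). apply NoDup_incl_length; auto.
    intros [a b] Hab. apply Hl in Hab. simpl in Hab. apply sq0 in Hab.
    destruct Hab as [-> ->]. left; auto. }
  apply le_INR in Hlen. simpl in Hlen. nra.
- assert (Hn0 : (0 < n)%Z) by lia.
  pose proof (r2_count n l Hn0 Hnd Hl) as Hc.
  apply le_INR in Hc. rewrite !mult_INR in Hc.
  assert (Hd := HC (Z.to_nat n)). 
  assert (Hnat : INR (Z.to_nat n) = IZR n) by (rewrite INR_IZR_INZ, Z2Nat.id by lia; reflexivity).
  rewrite Hnat in Hd.
  assert (Hd' : INR (NT.dcnt (Z.to_nat n)) <= C0 * Rpower (IZR n) (eps / 2)).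
  { apply Hd. apply (ssrbool.introT ssrnat.ltP). lia. }
  assert (HP : 0 <= INR (NT.dcnt (Z.to_nat n))) by apply pos_INR.
  assert (Hsq : Rpower (IZR n) (eps/2) * Rpower (IZR n) (eps/2) = Rpower (IZR n) eps).
  { rewrite <- Rpower_plus. f_equal. field. }
  assert (Hmono : Rpower (IZR n) eps <= Rpower (IZR n + 1) eps).
  { apply Rle_Rpower_l; [lra|]. split; [apply IZR_lt; lia| lra]. }
  simpl in Hc. replace (1+1+1+1) with 4 in Hc by ring.
  eapply Rle_trans; [exact Hc|].
  replace (4 * C0 * C0 * Rpower (IZR n + 1) eps) with
     (4 * ((C0 * C0) * Rpower (IZR n + 1) eps)) by ring.
  rewrite Rmult_assoc. apply Rmult_le_compat_l; [lra|].
  eapply Rle_trans; [apply Rmult_le_compat; [exact HP|exact HP|exact Hd'|exact Hd']|].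
  replace (C0 * Rpower (IZR n) (eps / 2) * (C0 * Rpower (IZR n) (eps / 2))) with
    (C0 * C0 * (Rpower (IZR n) (eps/2) * Rpower (IZR n) (eps/2))) by ring.
  rewrite Hsq. apply Rmult_le_compat_l; [nra|exact Hmono].
Qed.


Lemma sum_ind_lemma (j : nat) (g : nat -> R) (L : nat) :
  sum_f_R0 (fun k => if Nat.eqb j k then g k else 0) L = if Nat.leb j L then g j else 0.
Proof.
induction L as [|L IH]; simpl.
- destruct (Nat.eqb_spec j 0); destruct j; simpl; try lia; subst; auto.
- rewrite IH. destruct (Nat.eqb_spec j (S L)).
  + subst. rewrite (proj2 (Nat.leb_gt (S L) L)) by lia. rewrite Nat.leb_refl. ring.
  + destruct (Nat.leb_spec j L); destruct (Nat.leb_spec j (S L)); try lia; ring.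
Qed.

Lemma len_filter_cons {X} (f : X -> bool) x A :
  INR (length (filter f (x :: A))) = INR (length (filter f A)) + (if f x then 1 else 0).
Proof.
simpl. destruct (f x).
- change (length (x :: filter f A)) with (S (length (filter f A))). rewrite S_INR. ring.
- ring.
Qed.

Definition cnt {X} (j : X -> nat) (A : list X) (k : nat) : nat :=
  length (filter (fun x => Nat.eqb (j x) k) A).

Definition wsum {X} (j : X -> nat) (A : list X) : R :=
  fold_right (fun x acc => / (INR (j x) + 1) + acc) 0 A.

Lemma layer {X} (j : X -> nat) (L : nat) (A : list X) :
  wsum j A <= sum_f_R0 (fun k => INR (cnt j A k) / (INR k + 1)) L + INR (length A) / (INR L + 1).
Proof.
induction A as [|x A IH].
- unfold wsum, cnt; simpl. rewrite Rdiv_0_l, Rplus_0_r.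
  apply cond_pos_sum. intros n. simpl. rewrite Rdiv_0_l. lra.
- assert (E : sum_f_R0 (fun k => INR (cnt j (x :: A) k) / (INR k + 1)) L =
     sum_f_R0 (fun k => INR (cnt j A k) / (INR k + 1)) L +
     sum_f_R0 (fun k => if Nat.eqb (j x) k then / (INR k + 1) else 0) L).
  { rewrite <- sum_plus. apply sum_eq. intros i _. unfold cnt. rewrite len_filter_cons.
    destruct (Nat.eqb (j x) i); unfold Rdiv; ring. }
  rewrite E, sum_ind_lemma. change (length (x :: A)) with (S (length A)). rewrite S_INR.
  change (wsum j (x :: A)) with (/ (INR (j x) + 1) + wsum j A).
  assert (HL : 0 < INR L + 1) by (pose proof (pos_INR L); lra).
  destruct (Nat.leb_spec (j x) L).
  + assert (0 <= / (INR L + 1)) by (left; apply Rinv_0_lt_compat; lra).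
    unfold Rdiv in *. lra.
  + assert (Hj : / (INR (j x) + 1) <= / (INR L + 1)).
    { apply Rinv_le_contravar; [lra|]. apply le_INR in H. rewrite S_INR in H. lra. }
    unfold Rdiv in *. lra.
Qed.

Lemma ln_le_sub1 y : 0 < y -> ln y <= y - 1.
Proof. intros Hy. pose proof (exp_ineq1_le (ln y)). rewrite exp_ln in H by lra. lra. Qed.

Lemma harmonic L : sum_f_R0 (fun k => / (INR k + 1)) L <= 1 + ln (INR L + 1).
Proof.
induction L as [|L IH].
- simpl. rewrite Rplus_0_l, ln_1. lra.
- change (sum_f_R0 (fun k => / (INR k + 1)) (S L)) with (sum_f_R0 (fun k => / (INR k + 1)) L + / (INR (S L) + 1)).
  rewrite S_INR.
  assert (HL : 0 < INR L + 1) by (pose proof (pos_INR L); lra).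
  assert (Hk : / (INR L + 1 + 1) <= ln (INR L + 1 + 1) - ln (INR L + 1)).
  { pose proof (ln_le_sub1 ((INR L + 1) / (INR L + 1 + 1))) as H.
    assert (0 < (INR L + 1) / (INR L + 1 + 1)) by (apply Rdiv_lt_0_compat; lra).
    specialize (H H0). unfold Rdiv in H. rewrite ln_mult in H by (try apply Rinv_0_lt_compat; lra).
    rewrite ln_Rinv in H by lra.
    assert ((INR L + 1) * / (INR L + 1 + 1) - 1 = - / (INR L + 1 + 1)) by (field; lra).
    lra. }
  lra.
Qed.

Lemma ln_le_rpow y e : 0 < y -> 0 < e -> ln y <= Rpower y e / e.
Proof.
intros Hy He. unfold Rpower. pose proof (exp_ineq1_le (e * ln y)).
apply Rmult_le_reg_l with e; [lra|]. unfold Rdiv.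
replace (e * (exp (e * ln y) * / e)) with (exp (e * ln y)) by (field; lra). lra.
Qed.

Lemma filter_or_le {X} (p q1 q2 : X -> bool) (l : list X) :
  (forall x, p x = true -> q1 x = true \/ q2 x = true) ->
  (length (filter p l) <= length (filter q1 l) + length (filter q2 l))%nat.
Proof.
intros H. induction l as [|x l IH]; simpl; auto.
destruct (p x) eqn:Ep.
- specialize (H x Ep). destruct (q1 x), (q2 x); simpl; destruct H as [E|E]; try discriminate; lia.
- destruct (q1 x), (q2 x); simpl; lia.
Qed.


Definition nz (p : Z * Z) : Z := (fst p * fst p + snd p * snd p)%Z.

Lemma znorm_sq p : znorm p ^ 2 = IZR (nz p).
Proof.
unfold znorm, nz. rewrite pow2_sqrt.
- rewrite plus_IZR, !mult_IZR. ring.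
- pose proof (pow2_ge_0 (IZR (fst p))); pose proof (pow2_ge_0 (IZR (snd p))); lra.
Qed.

Lemma znorm_ge0 p : 0 <= znorm p.
Proof. unfold znorm; apply sqrt_pos. Qed.

Lemma znorm00 : znorm (0%Z, 0%Z) = 0.
Proof. unfold znorm; cbn [fst snd]. replace (IZR 0 ^ 2 + IZR 0 ^ 2) with 0 by ring. apply sqrt_0. Qed.

Definition fmax (l : list (Z * Z)) : Z := fold_right (fun q acc => Z.max (nz q) acc) 0%Z l.

Lemma fmax_ge l q : In q l -> (nz q <= fmax l)%Z.
Proof. induction l as [|x l IH]; simpl; [tauto|]. intros [->|H]; [lia|]. specialize (IH H); lia. Qed.

Lemma fmax_att l : fmax l = 0%Z \/ exists q, In q l /\ fmax l = nz q.
Proof.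
induction l as [|x l IH]; simpl; [auto|].
destruct (Z.max_spec (nz x) (fmax l)) as [[_ E]|[_ E]]; rewrite E.
- destruct IH as [IH|[q [Hq Eq]]]; [left; auto| right; exists q; auto].
- right; exists x; auto.
Qed.

Lemma fermi_facts kF N : fermi_momentum kF -> has_card (inBF kF) N ->
  1/2 <= kF ^ 2 /\ forall p, 1/2 <= Rabs (IZR (nz p) - kF ^ 2).
Proof.
intros [HkF [i [s [Hi [Hs HX]]]]] [lB [NDB [HB LB]]].
set (S0 := fmax lB).
assert (HS0 : IZR S0 < kF ^ 2).
{ destruct (fmax_att lB) as [E|[q [Hq E]]]; unfold S0; rewrite E.
  - simpl. nra.
  - apply HB in Hq. unfold inBF in Hq. rewrite <- znorm_sq.
    pose proof (znorm_ge0 q). nra. }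
assert (Hsup : s <= IZR S0).
{ destruct Hs as [_ Hs]. apply Hs. intros x [q [Hq ->]].
  rewrite znorm_sq. apply IZR_le. apply fmax_ge. apply HB; auto. }
assert (Hinf : IZR S0 + 1 <= i).
{ destruct Hi as [_ Hi]. rewrite <- plus_IZR. apply Hi. intros x [p [Hp ->]].
  unfold inBF in Hp. rewrite znorm_sq. apply IZR_le.
  assert (IZR S0 < IZR (nz p)).
  { rewrite <- znorm_sq. assert (kF <= znorm p) by lra. nra. }
  apply lt_IZR in H. lia. }
assert (Hs0 : 0 <= s).
{ destruct Hs as [Hs _]. apply Hs. exists (0%Z, 0%Z). split.
  - unfold inBF. rewrite znorm00. lra.
  - rewrite znorm00. ring. }
split; [lra|].
intros p. destruct (Rlt_dec (znorm p) kF) as [Hp|Hp].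
- assert (IZR (nz p) <= s).
  { destruct Hs as [Hs _]. apply Hs. exists p. split; [exact Hp| symmetry; apply znorm_sq]. }
  rewrite Rabs_left1; lra.
- assert (i <= IZR (nz p)).
  { destruct Hi as [Hi _]. apply Hi. exists p. split; [exact Hp| symmetry; apply znorm_sq]. }
  rewrite Rabs_right; lra.
Qed.

Lemma key_ineq (X : R) (n c : Z) : 1/2 <= Rabs (IZR n - X) -> Rabs (IZR c - X) <= 1/2 ->
  INR (Z.abs_nat (n - c)) + 1 <= 4 * Rabs (IZR n - X).
Proof.
intros H1 H2.
rewrite INR_IZR_INZ, Nat2Z.inj_abs_nat.
assert (HA : IZR (Z.abs (n - c)) <= Rabs (IZR n - X) + 1/2).
{ rewrite <- Rabs_Zabs, minus_IZR.
  replace (IZR n - IZR c) with ((IZR n - X) - (IZR c - X)) by ring.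
  eapply Rle_trans; [apply Rabs_triang|]. rewrite Rabs_Ropp. lra. }
destruct (Z.eq_dec (n - c) 0) as [E|E].
- rewrite E. simpl. lra.
- assert (1 <= IZR (Z.abs (n - c))) by (apply IZR_le; lia). lra.
Qed.

Lemma hbar2 N : 0 < INR N -> hbar N ^ 2 = / INR N.
Proof.
intros H. unfold hbar. simpl. rewrite Rmult_1_r, <- Rinv_mult, sqrt_sqrt; [reflexivity|lra].
Qed.

Definition fsum (A : list (Z * Z)) (kF : R) : R :=
  fold_right (fun p acc => / Rabs (znorm p ^ 2 - kF ^ 2) + acc) 0 A.

Lemma sum_rewrite N kF A : 0 < INR N -> hbar N ^ 2 * sum_inv_e N kF A = fsum A kF.
Proof.
intros HN. rewrite hbar2 by auto.
induction A as [|p A IH].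
- unfold sum_inv_e, fsum; simpl. ring.
- unfold sum_inv_e, fsum in *. cbn [fold_right]. rewrite Rmult_plus_distr_l, IH.
  unfold e_kin. rewrite hbar2 by auto. assert (HN2 : / INR N <> 0) by (apply Rinv_neq_0_compat; lra).
  rewrite Rinv_mult, <- Rmult_assoc, Rinv_r by exact HN2.
  ring.
Qed.

Lemma fsum_le kF A c :
  (forall p, 1/2 <= Rabs (IZR (nz p) - kF ^ 2)) -> Rabs (IZR c - kF ^ 2) <= 1/2 ->
  fsum A kF <= 4 * wsum (fun p => Z.abs_nat (nz p - c)) A.
Proof.
intros Hp Hc. induction A as [|p A IH].
- unfold fsum, wsum; simpl; lra.
- change (fsum (p :: A) kF) with (/ Rabs (znorm p ^ 2 - kF ^ 2) + fsum A kF).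
  change (wsum (fun p => Z.abs_nat (nz p - c)) (p :: A)) with
    (/ (INR (Z.abs_nat (nz p - c)) + 1) + wsum (fun p => Z.abs_nat (nz p - c)) A).
  rewrite znorm_sq.
  pose proof (key_ineq (kF ^ 2) (nz p) c (Hp p) Hc) as K.
  assert (Hj : 0 < INR (Z.abs_nat (nz p - c)) + 1) by (pose proof (pos_INR (Z.abs_nat (nz p - c))); lra).
  assert (/ Rabs (IZR (nz p) - kF ^ 2) <= 4 * / (INR (Z.abs_nat (nz p - c)) + 1)).
  { replace (/ Rabs (IZR (nz p) - kF ^ 2)) with (4 * / (4 * Rabs (IZR (nz p) - kF ^ 2))).
    - apply Rmult_le_compat_l; [lra|]. apply Rinv_le_contravar; lra.
    - rewrite Rinv_mult. field. specialize (Hp p). lra. }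
  lra.
Qed.

Definition zr (a : nat) : list Z := map (fun i => (Z.of_nat i - Z.of_nat a)%Z) (seq 0 (2 * a + 1)).

Lemma zr_in a x : (- Z.of_nat a <= x <= Z.of_nat a)%Z -> In x (zr a).
Proof.
intros H. unfold zr. apply in_map_iff. exists (Z.to_nat (x + Z.of_nat a)). split.
- rewrite Z2Nat.id by lia. lia.
- apply in_seq. lia.
Qed.

Lemma zr_len a : length (zr a) = (2 * a + 1)%nat.
Proof. unfold zr. rewrite length_map, length_seq. reflexivity. Qed.

Lemma zr_nodup a : NoDup (zr a).
Proof.
unfold zr. apply NoDup_map_NoDup_ForallPairs; [|apply seq_NoDup].
intros i j _ _ E. lia.
Qed.

Lemma N_bound kF N : 0 < kF -> has_card (inBF kF) N -> (1 <= N)%nat /\ kF <= 2 * INR N.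
Proof.
intros HkF [lB [NDB [HB LB]]].
destruct (archimed (kF / 2)) as [U1 U2].
set (u := up (kF / 2)) in *.
assert (Hu : (1 <= u)%Z) by (apply lt_IZR in U1 || idtac; assert (0 < IZR u) by lra; apply lt_IZR in H; lia).
set (b := Z.to_nat (u - 1)).
assert (Hb : INR b = IZR u - 1) by (unfold b; rewrite INR_IZR_INZ, Z2Nat.id by lia; rewrite minus_IZR; reflexivity).
set (l1 := map (fun x => (x, 0%Z)) (zr b)).
assert (ND1 : NoDup l1).
{ unfold l1. apply NoDup_map_NoDup_ForallPairs; [|apply zr_nodup].
  intros x y _ _ E. injection E; auto. }
assert (I1 : incl l1 lB).
{ intros [x y] Hxy. unfold l1 in Hxy. apply in_map_iff in Hxy.
  destruct Hxy as [x' [E Hx']]. injection E as <- <-.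
  apply HB. unfold inBF.
  unfold zr in Hx'. apply in_map_iff in Hx'. destruct Hx' as [i [Ei Hi]]. apply in_seq in Hi.
  assert (Hx : (- Z.of_nat b <= x' <= Z.of_nat b)%Z) by lia.
  assert (Hsq : IZR (nz (x', 0%Z)) <= INR b * INR b).
  { rewrite INR_IZR_INZ, <- mult_IZR. apply IZR_le. unfold nz; simpl. nia. }
  rewrite <- znorm_sq in Hsq. pose proof (znorm_ge0 (x', 0%Z)).
  assert (0 <= INR b) by apply pos_INR. nra. }
pose proof (NoDup_incl_length ND1 I1) as Hlen.
unfold l1 in Hlen. rewrite length_map, zr_len, LB in Hlen.
split; [lia|].
apply le_INR in Hlen. rewrite plus_INR, mult_INR in Hlen. simpl in Hlen.
pose proof (pos_INR b). assert (1 <= INR N) by lra. lra.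
Qed.

Lemma M_bound kF M : 0 < kF -> has_card (fun p => znorm p <= 2 * kF) M ->
  INR M <= (4 * kF + 3) ^ 2.
Proof.
intros HkF [lM [NDM [HM LM]]].
destruct (archimed (2 * kF)) as [U1 U2].
set (u := up (2 * kF)) in *.
assert (Hu : (1 <= u)%Z) by (assert (0 < IZR u) by lra; apply lt_IZR in H; lia).
set (a := Z.to_nat u).
assert (Ha : INR a = IZR u) by (unfold a; rewrite INR_IZR_INZ, Z2Nat.id by lia; reflexivity).
assert (I1 : incl lM (list_prod (zr a) (zr a))).
{ intros [x y] Hxy. apply HM in Hxy.
  assert (Hs : IZR (nz (x, y)) <= (2 * kF) ^ 2).
  { rewrite <- znorm_sq. pose proof (znorm_ge0 (x,y)). nra. }
  unfold nz in Hs; simpl in Hs. rewrite plus_IZR, !mult_IZR in Hs.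
  assert (Hx2 : IZR x * IZR x <= (2*kF)^2) by (pose proof (Rle_0_sqr (IZR y)); unfold Rsqr in *; nra).
  assert (Hy2 : IZR y * IZR y <= (2*kF)^2) by (pose proof (Rle_0_sqr (IZR x)); unfold Rsqr in *; nra).
  assert (Hx : - IZR u < IZR x < IZR u) by (split; nra).
  assert (Hy : - IZR u < IZR y < IZR u) by (split; nra).
  destruct Hx as [Hx1 Hx2']. destruct Hy as [Hy1 Hy2'].
  rewrite <- opp_IZR in Hx1, Hy1. apply lt_IZR in Hx1, Hx2', Hy1, Hy2'.
  apply in_prod; apply zr_in; unfold a; rewrite Z2Nat.id by lia; lia. }
pose proof (NoDup_incl_length NDM I1) as Hlen.
rewrite length_prod, zr_len, LM in Hlen.
apply le_INR in Hlen. rewrite mult_INR, plus_INR, mult_INR, Ha in Hlen. simpl in Hlen.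
eapply Rle_trans; [exact Hlen|].
assert (0 <= (1 + 1) * IZR u + 1) by lra.
assert ((1 + 1) * IZR u + 1 <= 4 * kF + 3) by lra.
simpl. nra.
Qed.


Lemma nz_ge0 p : (0 <= nz p)%Z.
Proof. unfold nz. nia. Qed.

Lemma fiber_bound e C (HC : 0 < C)
  (HCb : forall (n : Z) l, (0 <= n)%Z -> NoDup l ->
     (forall x, In x l -> (fst x * fst x + snd x * snd x = n)%Z) ->
     INR (length l) <= C * Rpower (IZR n + 1) e)
  (He : 0 < e) (A : list (Z * Z)) (HA : NoDup A) (n0 top : Z) :
  (n0 <= top)%Z ->
  INR (length (filter (fun p => Z.eqb (nz p) n0) A)) <= C * Rpower (IZR top + 1) e.
Proof.
intros Hn.
destruct (filter (fun p => Z.eqb (nz p) n0) A) as [|x F] eqn:EF.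
- simpl. pose proof (Rpower_pos (IZR top + 1) e). nra.
- assert (Hx : In x (filter (fun p => Z.eqb (nz p) n0) A)) by (rewrite EF; left; auto).
  apply filter_In in Hx. destruct Hx as [_ Hx]. apply Z.eqb_eq in Hx.
  pose proof (nz_ge0 x) as H0. rewrite Hx in H0.
  rewrite <- EF.
  eapply Rle_trans.
  + apply HCb with (n := n0); auto.
    * apply NoDup_filter; auto.
    * intros y Hy. apply filter_In in Hy. destruct Hy as [_ Hy]. apply Z.eqb_eq in Hy. exact Hy.
  + apply Rmult_le_compat_l; [lra|]. apply Rle_Rpower_l; [lra|].
    split.
    * assert (0 <= IZR n0) by (apply IZR_le; auto). lra.
    * apply IZR_le in Hn. lra.
Qed.

Lemma cnt_bound e C (HC : 0 < C)
  (HCb : forall (n : Z) l, (0 <= n)%Z -> NoDup l ->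
     (forall x, In x l -> (fst x * fst x + snd x * snd x = n)%Z) ->
     INR (length l) <= C * Rpower (IZR n + 1) e)
  (He : 0 < e) (A : list (Z * Z)) (HA : NoDup A) (c : Z) (L k : nat) :
  (k <= L)%nat ->
  INR (cnt (fun p => Z.abs_nat (nz p - c)) A k) <= 2 * (C * Rpower (IZR (c + Z.of_nat L) + 1) e).
Proof.
intros Hk. unfold cnt.
eapply Rle_trans.
- apply le_INR. apply (filter_or_le _ (fun p => Z.eqb (nz p) (c + Z.of_nat k)) (fun p => Z.eqb (nz p) (c - Z.of_nat k))).
  intros x Hx. apply Nat.eqb_eq in Hx.
  assert (Hz : Z.abs (nz x - c) = Z.of_nat k) by (rewrite <- Hx, Nat2Z.inj_abs_nat; reflexivity).
  destruct (Z.abs_spec (nz x - c)) as [[_ E]|[_ E]]; rewrite E in Hz.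
  + left. apply Z.eqb_eq. lia.
  + right. apply Z.eqb_eq. lia.
- rewrite plus_INR.
  assert (H1 := fiber_bound e C HC HCb He A HA (c + Z.of_nat k) (c + Z.of_nat L) ltac:(lia)).
  assert (H2 := fiber_bound e C HC HCb He A HA (c - Z.of_nat k) (c + Z.of_nat L) ltac:(lia)).
  lra.
Qed.

Lemma Rpower_ge1 x e : 1 <= x -> 0 <= e -> 1 <= Rpower x e.
Proof.
intros Hx He. rewrite <- (Rpower1 e). apply Rle_Rpower_l; lra.
Qed.

Theorem lemmaA3_aux :
  forall eps : R, 0 < eps ->
  exists C : R, 0 < C /\
    forall (kF : R) (N M : nat),
      fermi_momentum kF ->
      has_card (inBF kF) N ->
      has_card (fun p => znorm p <= 2 * kF) M ->
      forall A : list (Z * Z), NoDup A -> (length A <= M)%nat ->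
        hbar N ^ 2 * sum_inv_e N kF A <= C * Rpower (INR N) eps.
Proof.
intros eps Heps.
set (e := eps / 4).
assert (He : 0 < e) by (unfold e; lra).
destruct (r2_bound e He) as [C [HC HCb]].
set (R127 := Rpower 127 e). set (R122 := Rpower 122 e).
assert (H127 : 0 < R127) by apply Rpower_pos.
assert (H122 : 0 < R122) by apply Rpower_pos.
set (K := 4 * (2 * C * R127 * (1 + R122 / e) + 1)).
assert (HK : 0 < K).
{ unfold K. assert (0 < R122 / e) by (apply Rdiv_lt_0_compat; lra).
  assert (0 < C * R127) by nra. nra. }
exists K. split; [exact HK|].
intros kF N M Hf HN HM A HND HAM.
assert (HkF : 0 < kF) by (destruct Hf; auto).
destruct (N_bound kF N HkF HN) as [HN1 HkN].
destruct (fermi_facts kF N Hf HN) as [Hhalf Hgap].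
pose proof (M_bound kF M HkF HM) as HMb.
assert (HNr : 1 <= INR N) by (apply (le_INR 1) in HN1; simpl in HN1; lra).
destruct (archimed (kF ^ 2 - 1/2)) as [U1 U2].
set (c := up (kF ^ 2 - 1/2)) in *.
assert (Hc : Rabs (IZR c - kF ^ 2) <= 1/2) by (apply Rabs_le; lra).
rewrite sum_rewrite by lra.
set (L := length A).
set (j := fun p => Z.abs_nat (nz p - c)).
set (R0 := C * Rpower (IZR (c + Z.of_nat L) + 1) e).
assert (HR0 : 0 < R0) by (unfold R0; pose proof (Rpower_pos (IZR (c + Z.of_nat L) + 1) e); nra).
assert (S1 := fsum_le kF A c Hgap Hc).
assert (S2 := layer j L A).
assert (S3 : sum_f_R0 (fun k => INR (cnt j A k) / (INR k + 1)) L
             <= 2 * R0 * (1 + ln (INR L + 1))).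
{ eapply Rle_trans; [| apply Rmult_le_compat_l; [lra| apply harmonic]].
  rewrite scal_sum. apply sum_Rle. intros k Hk.
  pose proof (cnt_bound e C HC HCb He A HND c L k Hk) as Hb.
  fold j in Hb. fold R0 in Hb.
  assert (0 < INR k + 1) by (pose proof (pos_INR k); lra).
  unfold Rdiv. rewrite (Rmult_comm (/ (INR k + 1)) (2 * R0)). apply Rmult_le_compat_r; [left; apply Rinv_0_lt_compat; lra| exact Hb]. }
assert (HL1 : INR L / (INR L + 1) <= 1).
{ assert (0 <= INR L) by apply pos_INR.
  apply Rmult_le_reg_r with (INR L + 1); [lra|]. unfold Rdiv.
  rewrite Rmult_assoc, Rinv_l by lra. lra. }
assert (HLM : INR L <= INR M) by (apply le_INR; exact HAM).
set (P := Rpower (INR N ^ 2) e).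
assert (HP1 : 1 <= P) by (apply Rpower_ge1; [nra|lra]).
assert (HN2 : 0 < INR N ^ 2) by nra. assert (HN3 : 1 <= INR N ^ 2) by nra.
assert (B1 : IZR (c + Z.of_nat L) + 1 <= 127 * INR N ^ 2).
{ rewrite plus_IZR, <- INR_IZR_INZ.
  assert (kF ^ 2 <= 4 * INR N ^ 2) by nra.
  assert ((4 * kF + 3) ^ 2 <= 121 * INR N ^ 2) by nra.
  lra. }
assert (B2 : INR L + 1 <= 122 * INR N ^ 2).
{ assert ((4 * kF + 3) ^ 2 <= 121 * INR N ^ 2) by nra. lra. }
assert (HR0b : R0 <= C * (R127 * P)).
{ unfold R0. apply Rmult_le_compat_l; [lra|].
  unfold R127, P. rewrite Rpower_mult_distr by lra.
  apply Rle_Rpower_l; [lra|]. split; [|exact B1].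
  rewrite plus_IZR, <- INR_IZR_INZ. assert (0 <= IZR c).
  { apply IZR_le. apply le_IZR. lra. }
  pose proof (pos_INR L). lra. }
assert (Hln : ln (INR L + 1) <= R122 * P / e).
{ eapply Rle_trans.
  - apply ln_le_mono; [pose proof (pos_INR L); lra| exact B2].
  - eapply Rle_trans; [apply ln_le_rpow; [lra|exact He]|].
    unfold R122, P. rewrite Rpower_mult_distr by lra. lra. }
assert (Hfin : P * P = Rpower (INR N) eps).
{ unfold P. rewrite <- Rpower_plus.
  rewrite <- (Rpower_pow 2 (INR N)) by lra. rewrite Rpower_mult.
  f_equal. unfold e. simpl. field. }
rewrite <- Hfin.
assert (Hln0 : 0 <= ln (INR L + 1)).
{ rewrite <- ln_1. apply ln_le_mono; [lra|]. pose proof (pos_INR L); lra. }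
assert (T1 : 2 * R0 * (1 + ln (INR L + 1)) <= 2 * (C * (R127 * P)) * (1 + R122 * P / e)).
{ apply Rmult_le_compat; try lra. }
assert (T2 : 1 + R122 * P / e <= (1 + R122 / e) * P).
{ unfold Rdiv. assert (0 < / e) by (apply Rinv_0_lt_compat; lra). nra. }
assert (T3 : 2 * (C * (R127 * P)) * (1 + R122 * P / e) <= 2 * C * R127 * (1 + R122 / e) * (P * P)).
{ replace (2 * C * R127 * (1 + R122 / e) * (P * P)) with (2 * (C * (R127 * P)) * ((1 + R122 / e) * P)) by ring.
  apply Rmult_le_compat_l; [|exact T2]. assert (0 < C * R127) by nra. nra. }
unfold K. change (length A) with L in S2. fold j in S1.
assert (1 <= P * P) by nra.
lra.
Qed.


Open Scope R_scope.
Theorem lemmaA3 :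
  forall eps : R, 0 < eps ->
  exists C : R, 0 < C /\
    forall (kF : R) (N M : nat),
      fermi_momentum kF ->
      has_card (inBF kF) N ->
      has_card (fun p => znorm p <= 2 * kF) M ->
      forall A : list (Z * Z), NoDup A -> (length A <= M)%nat ->
        hbar N ^ 2 * sum_inv_e N kF A <= C * Rpower (INR N) eps.
Proof.
  exact lemmaA3_aux.
Qed.
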